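(* Let $I$ be a nonempty finite set, $A$ a nonempty set, $\rho_i:A\to A$ maps ($i\in I$) with $\rho_i^2=\mathrm{id}$ for all $i$, and $C^a=(c^a_{ij})_{i,j\in I}\in\mathbb Z^{I\times I}$ ($a\in A$) with $c^a_{ii}=2$ for all $i\in I$, $a\in A$. For $a\in A$ let $R^a\subset\mathbb Z^I$ be subsets satisfying (R1)–(R4) below. Then $\mathcal C=(I,A,(\rho_i)_{i\in I},(C^a)_{a\in A})$ is a Cartan scheme and $(R^a)_{a\in A}$ is a root system of type $\mathcal C$. Here, with $\sigma_i^a\in\mathrm{End}(\mathbb Z^I)$ given by $\sigma_i^a(\alpha_j)=\alpha_j-c^a_{ij}\alpha_i$, $R^a_+=R^a\cap\mathbb N_0^I$ and $m^a_{i,j}=|R^a\cap(\mathbb N_0\alpha_i+\mathbb N_0\alpha_j)|$, the conditions are, for all $a\in A$, $i,j\in I$: (R1) $R^a=R^a_+\cup(-R^a_+)$; (R2) $R^a\cap\mathbb Z\alpha_i=\{\alpha_i,-\alpha_i\}$; (R3) $\sigma_i^a(R^a)=R^{\rho_i(a)}$; (R4) if $i\neq j$ and $m^a_{i,j}$ is finite then $(\rho_i\rho_j)^{m^a_{i,j}}(a)=a$.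
   Context: $\{\alpha_i\mid i\in I\}$ is the standard basis of $\mathbb Z^I$; $\mathbb N_0=\{0,1,2,\dots\}$. A generalized Cartan matrix is $C=(c_{ij})_{i,j\in I}\in\mathbb Z^{I\times I}$ with $c_{ii}=2$, $c_{jk}\le0$ for $j\ne k$, and $c_{ij}=0\Rightarrow c_{ji}=0$. A Cartan scheme $\mathcal C=\mathcal C(I,A,(\rho_i)_{i\in I},(C^a)_{a\in A})$ consists of a nonempty set $A$, maps $\rho_i:A\to A$ and generalized Cartan matrices $C^a$ such that (C1) $\rho_i^2=\mathrm{id}$ and (C2) $c^a_{ij}=c^{\rho_i(a)}_{ij}$ for all $a\in A$, $i,j\in I$. A root system of type $\mathcal C$ is a family $(R^a)_{a\in A}$ of subsets of $\mathbb Z^I$ satisfying (R1)–(R4) as in the claim. *)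

(* Defs.v *)
From mathcomp Require Import all_boot all_order all_algebra.
Set Implicit Arguments. Unset Strict Implicit. Unset Printing Implicit Defensive.
Import Order.TTheory GRing.Theory Num.Theory.
Local Open Scope ring_scope.

(* Z^I is modelled as {ffun I -> int}, I a finite type. *)
Section CartanDefs.
Variable I : finType.
Variable A : Type.
Implicit Types (rho : I -> A -> A) (C : A -> I -> I -> int)
  (R : A -> {ffun I -> int} -> Prop).

Definition alpha (i : I) : {ffun I -> int} := [ffun j => ((j == i) : nat)%:Z].

Definition gen_cartan_matrix (c : I -> I -> int) : Prop :=
  (forall i, c i i = 2) /\
  (forall j k, j != k -> c j k <= 0) /\
  (forall i j, c i j = 0 -> c j i = 0).

Definition cartan_scheme rho C : Prop :=
  (exists a : A, True) /\
  (forall a, gen_cartan_matrix (C a)) /\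
  (forall i a, rho i (rho i a) = a) /\
  (forall a i j, C a i j = C (rho i a) i j).

(* sigma_i^a : alpha_j |-> alpha_j - c^a_{ij} alpha_i, extended linearly *)
Definition sigma C (a : A) (i : I) (v : {ffun I -> int}) : {ffun I -> int} :=
  [ffun k => v k - (\sum_(j : I) C a i j * v j) * alpha i k].

Definition nonneg (v : {ffun I -> int}) : bool := [forall k, 0 <= v k].

Definition Rplus R (a : A) (v : {ffun I -> int}) : Prop := R a v /\ nonneg v.

Definition in_cone (i j : I) (v : {ffun I -> int}) : Prop :=
  exists p q : nat, v = [ffun k => p%:Z * alpha i k + q%:Z * alpha j k].

(* m^a_{ij} is finite and equal to m *)
Definition m_is R (a : A) (i j : I) (m : nat) : Prop :=
  exists s : seq {ffun I -> int},
    uniq s /\ size s = m /\ (forall v, v \in s <-> (R a v /\ in_cone i j v)).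

Definition R1 R : Prop :=
  forall a v, R a v <-> (Rplus R a v \/ Rplus R a (- v)).
Definition R2 R : Prop :=
  forall a i v, (R a v /\ exists k : int, v = [ffun l => k * alpha i l]) <->
                (v = alpha i \/ v = - alpha i).
Definition R3 rho C R : Prop :=
  forall a i v, R (rho i a) v <-> exists w, R a w /\ sigma C a i w = v.
Definition R4 rho R : Prop :=
  forall a i j m, i != j -> m_is R a i j m ->
    iter m (fun b => rho i (rho j b)) a = a.

Definition root_system rho C R : Prop :=
  cartan_scheme rho C /\ R1 R /\ R2 R /\ R3 rho C R /\ R4 rho R.

End CartanDefs.

(* Main.v *)
Require Import Defs.
From mathcomp Require Import all_boot all_order all_algebra.
From mathcomp Require Import ring zify.
Import Order.TTheory GRing.Theory Num.Theory.
Local Open Scope ring_scope.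
Set Implicit Arguments. Unset Strict Implicit.

Definition vec (I : finType) (i j : I) (p q : int) : {ffun I -> int} :=
  [ffun l => p * alpha i l + q * alpha j l].

Lemma alphaE (I : finType) (i l : I) : alpha i l = ((l == i) : nat)%:Z.
Proof. by rewrite ffunE. Qed.

Lemma vec_i (I : finType) (i j : I) p q : i != j -> vec i j p q i = p.
Proof.
move=> H; rewrite ffunE !alphaE eqxx (negbTE H) /=. lia.
Qed.

Lemma vec_j (I : finType) (i j : I) p q : i != j -> vec i j p q j = q.
Proof.
move=> H; rewrite ffunE !alphaE eqxx eq_sym (negbTE H) /=. lia.
Qed.

Lemma vec_swap (I : finType) (i j : I) p q : vec i j p q = vec j i q p.
Proof. by apply/ffunP => l; rewrite !ffunE addrC. Qed.

Lemma alpha_vec (I : finType) (i j : I) : alpha j = vec i j 0 1.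
Proof. by apply/ffunP => l; rewrite !ffunE mul0r add0r mul1r. Qed.

Lemma sum_delta (I : finType) (f : I -> int) i :
  \sum_(l : I) f l * alpha i l = f i.
Proof.
rewrite (bigD1 i) //= big1 ?addr0; first by rewrite alphaE eqxx mulr1.
by move=> l /negbTE Hl; rewrite alphaE Hl mulr0.
Qed.

Lemma sigma_vec (I : finType) (A : Type) (C : A -> I -> I -> int) a (i j : I) p q :
  C a i i = 2 ->
  sigma C a i (vec i j p q) = vec i j (- p - q * C a i j) q.
Proof.
move=> Hii.
have Hs : \sum_(k : I) C a i k * vec i j p q k = p * C a i i + q * C a i j.
  rewrite (eq_bigr (fun k => p * (C a i k * alpha i k) + q * (C a i k * alpha j k))).
    by rewrite big_split /= -!mulr_sumr !sum_delta.
  by move=> k _; rewrite ffunE; ring.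
apply/ffunP => l; rewrite ffunE Hs Hii !ffunE; ring.
Qed.

Lemma sign_lemma (I : finType) (A : Type) (R : A -> {ffun I -> int} -> Prop) a v k l :
  R1 R -> R a v -> 0 < v k -> 0 <= v l.
Proof.
move=> HR1 Hv Hk; have [[_ /forallP H]|[_ /forallP H]] := (proj1 (HR1 a v) Hv).
  exact: H.
by move: (H k); rewrite ffunE oppr_ge0 => Hn; move: (lt_le_trans Hk Hn); rewrite ltxx.
Qed.

Theorem lemma2p5 (I : finType) (A : Type)
  (rho : I -> A -> A) (C : A -> I -> I -> int)
  (R : A -> {ffun I -> int} -> Prop) :
  (0 < #|I|)%N ->
  (exists a : A, True) ->
  (forall i a, rho i (rho i a) = a) ->
  (forall a i, C a i i = 2) ->
  R1 R -> R2 R -> R3 rho C R -> R4 rho R ->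
  cartan_scheme rho C /\ root_system rho C R.
Proof.
move=> _ Hne Hinv Hii HR1 HR2 HR3 HR4.
have Ral : forall a i, R a (alpha i).
  by move=> a i; have /proj2 /(_ (or_introl erefl)) [] := HR2 a i (alpha i).
have Rs : forall a i w, R a w -> R (rho i a) (sigma C a i w).
  by move=> a i w Hw; apply/(HR3 a i); exists w.
have Hle : forall a i j, i != j -> C a i j <= 0.
  move=> a i j ij.
  have := Rs a i _ (Ral a j); rewrite (alpha_vec i j) sigma_vec // => H.
  have := @sign_lemma _ _ _ _ _ j i HR1 H; rewrite vec_i // vec_j // => /(_ ltr01); lia.
have Hc2 : forall a i j, C a i j <= C (rho i a) i j.
  move=> a i j; have [->|ij] := eqVneq i j; first by rewrite !Hii.
  have := Rs _ i _ (Ral (rho i a) j); rewrite Hinv (alpha_vec i j) sigma_vec //.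
  move=> /(Rs a i); rewrite sigma_vec // => H.
  have := @sign_lemma _ _ _ _ _ j i HR1 H; rewrite vec_i // vec_j // => /(_ ltr01); lia.
have HC2 : forall a i j, C a i j = C (rho i a) i j.
  move=> a i j; apply/eqP; rewrite eq_le Hc2 /=.
  by have := Hc2 (rho i a) i j; rewrite Hinv.
have HM : forall a i j p q, i != j -> C a i j = 0 -> 0 < p -> 0 < q ->
    ~ R a (vec i j p q).
  move=> a i j p q ij H0 Hp Hq /(Rs a i); rewrite sigma_vec // H0 => H.
  have := @sign_lemma _ _ _ _ _ j i HR1 H; rewrite vec_i // vec_j // => /(_ Hq); lia.
have Hsym : forall a i j, C a i j = 0 -> C a j i = 0.
  move=> a i j H0; have [eij|ij] := eqVneq i j.
    by move: H0; rewrite eij Hii.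
  have := Rs _ j _ (Ral (rho j a) i); rewrite Hinv (alpha_vec j i) sigma_vec //.
  rewrite -HC2 vec_swap => H.
  have := Hle a j i; rewrite eq_sym => /(_ ij) Hl.
  case: (ltrgt0P (C a j i)) => Hlt //.
    by move: (lt_le_trans Hlt Hl); rewrite ltxx.
  rewrite sub0r mul1r in H.
  by exfalso; apply: (HM a i j 1 (- C a j i) ij H0 ltr01 _ H); rewrite oppr_gt0.
have Hcs : cartan_scheme rho C.
  split; first by [].
  split; last by split.
  move=> a; split; first by [].
  by split; [exact: Hle | exact: Hsym].
by split; last by split.
Qed.
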